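(* Let $\mathbb{T}^2$ be the torus. Then $\Gamma_2(B_2(\mathbb{T}^2))\cap Z(B_2(\mathbb{T}^2))=\{1\}$, where $Z(\cdot)$ denotes the centre.
   Context: $B_2(\mathbb{T}^2)$ is the fundamental group of the space of unordered pairs of distinct points of the torus; $\Gamma_2(G)=[G,G]$. *)

(* Defs.v *)
(* Plain MathComp (boot) world: B_2(T^2) given by Bellingeri's finite
   presentation, realised as words modulo the congruence generated by the
   relators (i.e. the free group modulo the normal closure of the relators). *)
From mathcomp Require Import all_boot.
From Stdlib Require Import Relation_Operators.

Set Implicit Arguments.
Unset Strict Implicit.
Unset Printing Implicit Defensive.

(* Generators of B_2(T^2): a, b (loops of the first strand along the two
   generating cycles of the torus) and sigma (= sigma_1, the half twist). *)
Inductive gen := gen_a | gen_b | gen_s.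

(* A letter is a generator together with an exponent sign:
   (g, false) = g, (g, true) = g^{-1}. *)
Definition letter := (gen * bool)%type.
Definition word := seq letter.

Definition winv (w : word) : word := rev (map (fun x => (x.1, ~~ x.2)) w).

Definition a  : word := [:: (gen_a, false)].
Definition A  : word := [:: (gen_a, true)].
Definition b  : word := [:: (gen_b, false)].
Definition B  : word := [:: (gen_b, true)].
Definition s  : word := [:: (gen_s, false)].
Definition S  : word := [:: (gen_s, true)].

(* Bellingeri's presentation of B_n(T^2)
   specialised to n = 2:
     sigma^-1 a sigma^-1 a = a sigma^-1 a sigma^-1
     sigma^-1 b sigma^-1 b = b sigma^-1 b sigma^-1
     sigma^-1 a sigma^-1 b = b sigma^-1 a sigma
     a b^-1 a^-1 b = sigma^2
   together with the free-group cancellation relators x x^-1. *)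
Inductive is_relator : word -> Prop :=
  | rel_free (x : letter) : is_relator [:: x; (x.1, ~~ x.2)]
  | rel_R2a : is_relator ((S ++ a ++ S ++ a) ++ winv (a ++ S ++ a ++ S))
  | rel_R2b : is_relator ((S ++ b ++ S ++ b) ++ winv (b ++ S ++ b ++ S))
  | rel_R3  : is_relator ((S ++ a ++ S ++ b) ++ winv (b ++ S ++ a ++ s))
  | rel_TR  : is_relator ((a ++ B ++ A ++ b) ++ winv (s ++ s)).

Inductive step : word -> word -> Prop :=
  | step_ins (u v r : word) : is_relator r -> step (u ++ v) (u ++ r ++ v).

Definition weq : word -> word -> Prop := clos_refl_sym_trans word step.

(* Group operations on representatives: product = concatenation,
   identity = [::], inverse = winv. *)
Definition wcomm (x y : word) : word := winv x ++ winv y ++ x ++ y.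

Definition in_Gamma2 (w : word) : Prop :=
  exists l : seq (word * word),
    weq w (flatten (map (fun p => wcomm p.1 p.2) l)).

Definition in_center (w : word) : Prop :=
  forall g : word, weq (w ++ g) (g ++ w).

(* Main.v *)
From HB Require Import structures.
Require Import Defs.
From mathcomp Require Import all_boot.
From Stdlib Require Import Relation_Operators.

Set Implicit Arguments.
Unset Strict Implicit.
Unset Printing Implicit Defensive.

Definition gen_eqb (x y : gen) : bool :=
  match x, y with
  | gen_a, gen_a | gen_b, gen_b | gen_s, gen_s => true
  | _, _ => false end.
Lemma gen_eqP : Equality.axiom gen_eqb.
Proof. by case; case; constructor. Qed.
HB.instance Definition _ := hasDecEq.Build gen gen_eqP.

Lemma weq_refl u : weq u u. Proof. exact: rst_refl. Qed.
Lemma weq_sym u v : weq u v -> weq v u. Proof. exact: rst_sym. Qed.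
Lemma weq_trans u v w : weq u v -> weq v w -> weq u w. Proof. exact: rst_trans. Qed.

Lemma step_ctx p q u v : step u v -> step (p ++ u ++ q) (p ++ v ++ q).
Proof.
case=> x y r hr.
have -> : p ++ (x ++ y) ++ q = (p ++ x) ++ (y ++ q) by rewrite !catA.
have -> : p ++ (x ++ r ++ y) ++ q = (p ++ x) ++ r ++ (y ++ q) by rewrite !catA.
by constructor.
Qed.

Lemma weq_ctx p q u v : weq u v -> weq (p ++ u ++ q) (p ++ v ++ q).
Proof.
elim=> [x y h|x|x y _ ih|x y z _ ih1 _ ih2].
- by apply: rst_step; apply: step_ctx.
- exact: weq_refl.
- exact: weq_sym.
- exact: weq_trans ih1 ih2.
Qed.

Lemma weq_catl p u v : weq u v -> weq (p ++ u) (p ++ v).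
Proof. by move=> h; have := weq_ctx p [::] h; rewrite !cats0. Qed.
Lemma weq_catr q u v : weq u v -> weq (u ++ q) (v ++ q).
Proof. by move=> h; have := weq_ctx [::] q h. Qed.
Lemma weq_cat u v u' v' : weq u v -> weq u' v' -> weq (u ++ u') (v ++ v').
Proof. by move=> h1 h2; apply: weq_trans (weq_catr _ h1) (weq_catl _ h2). Qed.

Lemma weq_relator r : is_relator r -> weq [::] r.
Proof.
move=> hr; have := @step_ins [::] [::] r hr; rewrite /= cats0 => h.
exact: rst_step.
Qed.

Definition linv (l : letter) : letter := (l.1, ~~ l.2).
Lemma linvK l : linv (linv l) = l. Proof. by case: l => g []. Qed.

Lemma weq_cancel l : weq [::] [:: l; linv l].
Proof. exact: weq_relator (rel_free l). Qed.

Lemma winv_cat u v : winv (u ++ v) = winv v ++ winv u.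
Proof. by rewrite /winv map_cat rev_cat. Qed.
Lemma winvK u : winv (winv u) = u.
Proof.
rewrite /winv map_rev revK -map_comp -[RHS]map_id; apply: eq_map.
by case=> g [].
Qed.
Lemma winv_cons l u : winv (l :: u) = winv u ++ [:: linv l].
Proof. by rewrite -cat1s winv_cat. Qed.

Lemma weq_cancelr u : weq [::] (u ++ winv u).
Proof.
elim: u => [|l u ih] /=; first exact: weq_refl.
rewrite winv_cons catA -cat1s -catA.
apply: weq_trans (weq_cancel l) _.
have := weq_ctx [:: l] [:: linv l] ih; rewrite /= => h.
apply: weq_trans h _; rewrite catA; exact: weq_refl.
Qed.
Lemma weq_cancell u : weq [::] (winv u ++ u).
Proof. by have := weq_cancelr (winv u); rewrite winvK. Qed.

Definition triv r := weq [::] r.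
Lemma triv_rot x y : triv (x ++ y) -> triv (y ++ x).
Proof.
move=> h; apply: weq_trans (weq_cancelr y) _.
have := weq_ctx y (winv y) h; rewrite cat0s => h2.
apply: weq_trans h2 _.
have h3 := weq_catl (y ++ x) (weq_sym (weq_cancelr y)); rewrite cats0 !catA in h3.
by rewrite !catA.
Qed.
Lemma triv_winv r : triv r -> triv (winv r).
Proof.
move=> h; apply: weq_trans (weq_cancell r) _.
by have := weq_catl (winv r) (weq_sym h); rewrite cats0.
Qed.
Lemma triv_rule p d : triv (p ++ d) -> weq p (winv d).
Proof.
move=> h.
have h1 := weq_catl p (weq_cancelr d); rewrite cats0 in h1.
apply: weq_trans h1 _; rewrite catA.
by have := weq_catr (winv d) (weq_sym h).
Qed.

Definition push (st : word) (l : letter) : word :=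
  if st is l' :: st' then (if l' == linv l then st' else l :: st) else [:: l].
Definition red (w : word) : word := rev (foldl push [::] w).

Lemma weq_push st l : weq (rev st ++ [:: l]) (rev (push st l)).
Proof.
case: st => [|l' st] /=; first exact: weq_refl.
case: eqP => [->|_].
  rewrite rev_cons -cats1 -catA /=.
  have := weq_catl (rev st) (weq_sym (weq_cancel (linv l))); rewrite linvK cats0; apply.
by rewrite (rev_cons l) cats1; exact: weq_refl.
Qed.

Lemma weq_fold st w : weq (rev st ++ w) (rev (foldl push st w)).
Proof.
elim: w st => [|l w ih] st /=; first by rewrite cats0; exact: weq_refl.
apply: weq_trans (ih (push st l)).
rewrite -cat1s catA; apply: weq_catr; exact: weq_push.
Qed.

Lemma weq_red w : weq w (red w).
Proof. exact: (weq_fold [::] w). Qed.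

Definition rots (r : word) := [seq rot i r | i <- iota 0 (size r)].
Definition rels : seq word :=
  [:: (S ++ a ++ S ++ a) ++ winv (a ++ S ++ a ++ S);
      (S ++ b ++ S ++ b) ++ winv (b ++ S ++ b ++ S);
      (S ++ a ++ S ++ b) ++ winv (b ++ S ++ a ++ s);
      (a ++ B ++ A ++ b) ++ winv (s ++ s)].
Definition allrels := flatten [seq rots r ++ rots (winv r) | r <- rels].
Definition rules := flatten [seq [seq (take k r, winv (drop k r)) | k <- iota 0 (size r).+1] | r <- allrels].

Lemma triv_rels r : r \in rels -> triv r.
Proof.
rewrite !inE => /or4P [] /eqP ->; apply: weq_relator; constructor.
Qed.

Lemma triv_rots r x : triv r -> x \in rots r -> triv x.
Proof.
move=> h /mapP [i _ ->]; rewrite /rot; apply: triv_rot; by rewrite cat_take_drop.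
Qed.

Lemma triv_allrels r : r \in allrels -> triv r.
Proof.
move/flattenP=> [xs /mapP [r0 hr0 ->]]; rewrite mem_cat => /orP [] h.
- exact: triv_rots (triv_rels hr0) h.
- exact: triv_rots (triv_winv (triv_rels hr0)) h.
Qed.

Lemma rules_sound pq : pq \in rules -> weq pq.1 pq.2.
Proof.
move/flattenP=> [xs /mapP [r hr ->]] /mapP [k _ ->] /=.
apply: triv_rule; rewrite cat_take_drop; exact: triv_allrels.
Qed.

Definition onestep (x y : word) :=
  has (fun i => has (fun pq => (take (size pq.1) (drop i x) == pq.1) &&
     (red (take i x ++ pq.2 ++ drop (i + size pq.1) x) == y)) rules)
   (iota 0 (size x).+1).

Lemma onestep_sound x y : onestep x y -> weq x y.
Proof.
move/hasP=> [i _] /hasP [pq hpq] /andP [/eqP h1 /eqP <-].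
apply: weq_trans (weq_red _).
have -> : drop (i + size pq.1) x = drop (size pq.1) (drop i x) by rewrite drop_drop addnC.
rewrite -{1}(cat_take_drop i x) -{1}(cat_take_drop (size pq.1) (drop i x)) h1.
apply: weq_ctx; exact: rules_sound.
Qed.

Fixpoint chk (x : word) (ys : seq word) : bool :=
  match ys with [::] => x == [::] | y :: ys => onestep x y && chk y ys end.

Lemma chk_sound x ys : chk x ys -> weq x [::].
Proof.
elim: ys x => [|y ys ih] x /=; first by move/eqP ->; exact: weq_refl.
by move/andP=> [h1 h2]; apply: weq_trans (onestep_sound h1) (ih _ h2).
Qed.

Lemma eq_by_cert ys u v : chk (red (u ++ winv v)) ys -> weq u v.
Proof.
move/chk_sound=> h.
have h1 := weq_trans (weq_red _) h.
have h2 := weq_catr v h1; rewrite /= -catA in h2.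
apply: weq_trans _ h2.
by have := weq_catl u (weq_cancell v); rewrite cats0.
Qed.
Definition la : letter := (gen_a, false).
Definition lA : letter := (gen_a, true).
Definition lb : letter := (gen_b, false).
Definition lB : letter := (gen_b, true).
Definition ls : letter := (gen_s, false).
Definition lS : letter := (gen_s, true).
Definition t : word := [:: lb; lS; la].
Definition z1 : word := [:: la; lS; la; lS].
Definition z2 : word := [:: lb; lS; lb; lS].
Definition Z1 : word := winv z1.
Definition Z2 : word := winv z2.

Lemma F_z1a : weq (z1 ++ a) (a ++ z1).
Proof. apply: (@eq_by_cert [:: [::]] (z1 ++ a) (a ++ z1)); by vm_compute. Qed.

Lemma F_z1b : weq (z1 ++ b) (b ++ z1).
Proof. apply: (@eq_by_cert [:: [:: lS; la; lS; la; lb; ls; lA; ls; lA; lB]; [:: lS; la; lS; la; lb; lA; ls; lA; ls; lB]; [:: lS; la; lS; lb; lS; lA; ls; lB]; [::]] (z1 ++ b) (b ++ z1)); by vm_compute. Qed.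

Lemma F_z1s : weq (z1 ++ s) (s ++ z1).
Proof. apply: (@eq_by_cert [:: [::]] (z1 ++ s) (s ++ z1)); by vm_compute. Qed.

Lemma F_z2a : weq (z2 ++ a) (a ++ z2).
Proof. apply: (@eq_by_cert [:: [:: lb; lS; lS; la; lB; lA]; [::]] (z2 ++ a) (a ++ z2)); by vm_compute. Qed.

Lemma F_z2b : weq (z2 ++ b) (b ++ z2).
Proof. apply: (@eq_by_cert [:: [::]] (z2 ++ b) (b ++ z2)); by vm_compute. Qed.

Lemma F_z2s : weq (z2 ++ s) (s ++ z2).
Proof. apply: (@eq_by_cert [:: [::]] (z2 ++ s) (s ++ z2)); by vm_compute. Qed.

Lemma F_ta : weq (a ++ t) (z1 ++ t ++ A).
Proof. apply: (@eq_by_cert [:: [::]] (a ++ t) (z1 ++ t ++ A)); by vm_compute. Qed.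

Lemma F_tA : weq (A ++ t) (Z1 ++ t ++ a).
Proof. apply: (@eq_by_cert [:: [:: lA; ls; lA; ls; la; lS; la; lS]; [::]] (A ++ t) (Z1 ++ t ++ a)); by vm_compute. Qed.

Lemma F_tb : weq (b ++ t) (z2 ++ t ++ B).
Proof. apply: (@eq_by_cert [:: [:: lb; lb; lS; lb; lS; lB; ls; lB; ls; lB]; [::]] (b ++ t) (z2 ++ t ++ B)); by vm_compute. Qed.

Lemma F_tB : weq (B ++ t) (Z2 ++ t ++ b).
Proof. apply: (@eq_by_cert [:: [::]] (B ++ t) (Z2 ++ t ++ b)); by vm_compute. Qed.

Lemma F_tt : weq (t ++ t) (z1 ++ z2).
Proof. apply: (@eq_by_cert [:: [:: lb; lS; la; lS; la; lB; ls; lA; ls; lA]; [:: lb; lS; la; lS; la; lB; lA; ls; lA; ls]; [:: lb; lS; la; ls; lB; ls; lA; ls]; [::]] (t ++ t) (z1 ++ z2)); by vm_compute. Qed.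

Lemma F_s : weq (s) (t ++ Z2 ++ A ++ b).
Proof. apply: (@eq_by_cert [:: [:: ls; lB; la; lb; lA; ls]; [::]] (s) (t ++ Z2 ++ A ++ b)); by vm_compute. Qed.

Lemma F_S : weq (S) (t ++ Z2 ++ b ++ A).
Proof. apply: (@eq_by_cert [:: [::]] (S) (t ++ Z2 ++ b ++ A)); by vm_compute. Qed.
From Stdlib Require Import ZArith Lia.

Fixpoint rd (w : word) : bool :=
  match w with
  | x :: ((y :: _) as w') => (y != linv x) && rd w'
  | _ => true
  end.

Lemma rd_cons l w : rd (l :: w) -> rd w.
Proof. by case: w => //= y w /andP []. Qed.

Lemma linv_eq x y : (y == linv x) = (x == linv y).
Proof. apply/eqP/eqP => e. rewrite e linvK //. rewrite e linvK //. Qed.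

Lemma rd_push st l : rd st -> rd (push st l).
Proof.
case: st => [|l' st] //=.
case: eqP => [_|ne] h; first exact: rd_cons h.
by rewrite /= h andbT; apply/eqP.
Qed.

Lemma rd_fold st w : rd st -> rd (foldl push st w).
Proof. elim: w st => //= l w ih st h; apply: ih; exact: rd_push. Qed.

Lemma push_pushK st l : rd st -> push (push st l) (linv l) = st.
Proof.
case: st => [|l' st] /=; first by rewrite linvK eqxx.
case: eqP => [->|ne] h /=.
  case: st h => [|l'' st] //= /andP [h1 _].
  by rewrite linvK in h1 *; rewrite (negbTE h1).
by rewrite linvK eqxx.
Qed.


Lemma fold_push_rev st k l : rd st ->
  foldl push st (rev (push k l)) = push (foldl push st (rev k)) l.
Proof.
move=> hst; case: k => [|l' k] /=; first by [].
case: eqP => [->|ne].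
  rewrite rev_cons foldl_rcons.
  by have := push_pushK (linv l) (rd_fold (rev k) hst); rewrite linvK => ->.
by rewrite rev_cons foldl_rcons.
Qed.

Lemma fold_red st w : rd st -> foldl push st (red w) = foldl push st w.
Proof.
move=> hst; elim/last_ind: w => [|w l ih] //.
by rewrite /red !foldl_rcons fold_push_rev // ih.
Qed.

Lemma fold_cat_rd st k : rd (st ++ k) -> foldl push k (rev st) = st ++ k.
Proof.
elim: st => [|l st ih] //= h.
rewrite rev_cons foldl_rcons ih; last by case: (st ++ k) h => //= y w /andP [].
case: (st ++ k) h => [|y w] //= /andP [h1 _].
by rewrite /= (negbTE h1).
Qed.

Lemma fold_rev_rd st : rd st -> foldl push [::] (rev st) = st.
Proof. by move=> h; have := @fold_cat_rd st [::]; rewrite cats0; apply. Qed.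

Lemma rev_fold st w : rd st -> rev (foldl push st w) = red (rev st ++ w).
Proof. by move=> h; rewrite /red foldl_cat fold_rev_rd. Qed.

Definition alpha (w : word) : word := map linv w.
Lemma alphaK w : alpha (alpha w) = w.
Proof. by rewrite /alpha -map_comp -[RHS]map_id; apply: eq_map => x /=; rewrite linvK. Qed.
Lemma alpha_push st l : alpha (push st l) = push (alpha st) (linv l).
Proof.
case: st => [|l' st] //=.
have -> : (linv l' == linv (linv l)) = (l' == linv l).
  by apply/eqP/eqP => [e|->//]; rewrite -(linvK l') e linvK.
by case: eqP.
Qed.
Lemma alpha_fold st w : alpha (foldl push st w) = foldl push (alpha st) (alpha w).
Proof. elim: w st => //= l w ih st; by rewrite ih alpha_push. Qed.
Lemma rd_alpha st : rd (alpha st) = rd st.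
Proof.
elim: st => [|x st ih] //=; case: st ih => [|y st] //= ih.
rewrite ih; congr (_ && _).
rewrite linvK; congr (~~ _); apply/eqP/eqP => e; [by rewrite -e linvK | by rewrite e linvK].
Qed.
Lemma alpha_rev w : alpha (rev w) = rev (alpha w).
Proof. exact: map_rev. Qed.

Definition nos (l : letter) : bool := l.1 != gen_s.
Definition good (f : word) : bool := rd f && all nos f.

Lemma good_push f l : nos l -> good f -> good (push f l).
Proof.
move=> hl /andP [h1 h2]; rewrite /good rd_push //=.
case: f h1 h2 => [|l' f] /=; first by rewrite hl.
case: eqP => _ _ /andP [] //= -> ->; by rewrite hl.
Qed.
Lemma good_fold f w : all nos w -> good f -> good (foldl push f w).
Proof. elim: w f => //= l w ih f /andP [h1 h2] hf; apply: ih => //; exact: good_push. Qed.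
Lemma good_alpha f : good f -> good (alpha f).
Proof.
rewrite /good rd_alpha => /andP [-> h] /=.
by rewrite /alpha all_map; apply: sub_all h => -[g sg].
Qed.

Local Open Scope Z_scope.
Definition abl1 (l : letter) : Z :=
  match l with (gen_a, false) => 1 | (gen_a, true) => -1 | _ => 0 end.
Definition abl2 (l : letter) : Z :=
  match l with (gen_b, false) => 1 | (gen_b, true) => -1 | _ => 0 end.
Definition ab1 (w : word) : Z := foldr (fun l acc => abl1 l + acc) 0 w.
Definition ab2 (w : word) : Z := foldr (fun l acc => abl2 l + acc) 0 w.

Lemma abl1_linv l : abl1 (linv l) = - abl1 l. Proof. by case: l => [[] []]. Qed.
Lemma abl2_linv l : abl2 (linv l) = - abl2 l. Proof. by case: l => [[] []]. Qed.

Lemma ab1_cons l u : ab1 (l :: u) = abl1 l + ab1 u. Proof. by []. Qed.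
Lemma ab2_cons l u : ab2 (l :: u) = abl2 l + ab2 u. Proof. by []. Qed.
Lemma ab1_cat u v : ab1 (u ++ v) = ab1 u + ab1 v.
Proof. elim: u => //= l u ->; lia. Qed.
Lemma ab2_cat u v : ab2 (u ++ v) = ab2 u + ab2 v.
Proof. elim: u => //= l u ->; lia. Qed.
Lemma ab1_rev u : ab1 (rev u) = ab1 u.
Proof. elim: u => //= l u ih; rewrite rev_cons -cats1 ab1_cat ih /=; lia. Qed.
Lemma ab2_rev u : ab2 (rev u) = ab2 u.
Proof. elim: u => //= l u ih; rewrite rev_cons -cats1 ab2_cat ih /=; lia. Qed.
Lemma ab1_alpha u : ab1 (alpha u) = - ab1 u.
Proof. elim: u => [|l u ih] //; rewrite /alpha map_cons -/(alpha u) !ab1_cons ih abl1_linv; lia. Qed.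
Lemma ab2_alpha u : ab2 (alpha u) = - ab2 u.
Proof. elim: u => [|l u ih] //; rewrite /alpha map_cons -/(alpha u) !ab2_cons ih abl2_linv; lia. Qed.
Lemma ab1_push st l : ab1 (push st l) = ab1 st + abl1 l.
Proof.
case: st => [|l' st] /=; first lia.
case: eqP => [->|_]; rewrite ?ab1_cons ?abl1_linv; lia.
Qed.
Lemma ab2_push st l : ab2 (push st l) = ab2 st + abl2 l.
Proof.
case: st => [|l' st] /=; first lia.
case: eqP => [->|_]; rewrite ?ab2_cons ?abl2_linv; lia.
Qed.
Lemma ab1_fold st w : ab1 (foldl push st w) = ab1 st + ab1 w.
Proof. elim: w st => /= [|l w ih] st; [lia | rewrite ih ab1_push; lia]. Qed.
Lemma ab2_fold st w : ab2 (foldl push st w) = ab2 st + ab2 w.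
Proof. elim: w st => /= [|l w ih] st; [lia | rewrite ih ab2_push; lia]. Qed.

Record stt := St { se : bool; sm1 : Z; sm2 : Z; sf : word }.
Definition bz (b : bool) : Z := if b then 1 else 0.
Definition rmul (g : stt) (l : letter) : stt :=
  match l with
  | (gen_s, sg) => St (~~ se g) (sm1 g + ab1 (sf g) + bz (se g))
                       (sm2 g + ab2 (sf g) - 1 + bz (se g))
                       (foldl push (alpha (sf g)) (if sg then [:: lb; lA] else [:: lA; lb]))
  | _ => St (se g) (sm1 g) (sm2 g) (push (sf g) l)
  end.
Definition alphaif (e : bool) w := if e then alpha w else w.
Definition gmul (h k : stt) : stt :=
  St (se h (+) se k)
     (sm1 h + sm1 k + (if se k then ab1 (sf h) else 0) + bz (se h && se k))
     (sm2 h + sm2 k + (if se k then ab2 (sf h) else 0) + bz (se h && se k))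
     (foldl push (alphaif (se k) (sf h)) (rev (sf k))).
Definition g0 := St false 0 0 [::].
Definition phi w := foldl rmul g0 w.
Definition gd (g : stt) := good (sf g).

Lemma gd_rmul g l : gd g -> gd (rmul g l).
Proof.
case: g => e m1 m2 f; case: l => [[] sg] /= h; rewrite /gd /=.
- exact: good_push.
- exact: good_push.
- apply: good_fold; first by case: sg.
  exact: good_alpha.
Qed.

Lemma gd_fold g w : gd g -> gd (foldl rmul g w).
Proof. elim: w g => //= l w ih g h; apply: ih; exact: gd_rmul. Qed.

Lemma gd_phi w : gd (phi w).
Proof. exact: gd_fold. Qed.

Lemma gmul_g0 h : gmul h g0 = h.
Proof. case: h => e m1 m2 f; rewrite /gmul /= addbF andbF /=; congr St; lia. Qed.

Lemma g0_gmul k : gd k -> gmul g0 k = k.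
Proof.
case: k => e m1 m2 f; rewrite /gd /gmul /= => /andP [h _].
have -> : alphaif e [::] = [::] by case: e.
rewrite fold_rev_rd //; congr St; case: e => /=; lia.
Qed.

Lemma rd_alphaif e f : rd f -> rd (alphaif e f).
Proof. by case: e => //=; rewrite rd_alpha. Qed.

Lemma ab1_alphaif e f : ab1 (alphaif e f) = if e then - ab1 f else ab1 f.
Proof. by case: e => //=; rewrite ab1_alpha. Qed.
Lemma ab2_alphaif e f : ab2 (alphaif e f) = if e then - ab2 f else ab2 f.
Proof. by case: e => //=; rewrite ab2_alpha. Qed.

Lemma rmul_gmul h k l : gd h -> gd k -> rmul (gmul h k) l = gmul h (rmul k l).
Proof.
case: h => e1 a1 b1 f1; case: k => e2 a2 b2 f2; rewrite /gd /= => /andP [h1 _] /andP [h2 _].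
case: l => [[] sg]; rewrite /rmul /gmul /=.
- by rewrite fold_push_rev // rd_alphaif.
- by rewrite fold_push_rev // rd_alphaif.
- have hA : alpha (alphaif e2 f1) = alphaif (~~ e2) f1 by case: e2; rewrite /= ?alphaK.
  rewrite rev_fold ?rd_alpha // fold_red ?rd_alphaif // alpha_fold hA -foldl_cat alpha_rev.
  rewrite ab1_fold ab2_fold ab1_alphaif ab2_alphaif ab1_rev ab2_rev; clear hA.
  congr St; first by case: e1; case: e2.
  all: case: e1; case: e2 => /=; lia.
Qed.

Lemma fold_gmul h k w : gd h -> gd k -> foldl rmul (gmul h k) w = gmul h (foldl rmul k w).
Proof.
elim: w k => //= l w ih k hh hk.
rewrite rmul_gmul // ih //; exact: gd_rmul.
Qed.

Lemma fold_phi h w : gd h -> foldl rmul h w = gmul h (phi w).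
Proof.
move=> hh; rewrite -{1}(gmul_g0 h) fold_gmul //.
Qed.

Lemma phi_cat u v : phi (u ++ v) = gmul (phi u) (phi v).
Proof. by rewrite /phi foldl_cat fold_phi //; exact: gd_phi. Qed.

Lemma phi_rel r : is_relator r -> phi r = g0.
Proof. case; try by vm_compute. by case=> [[] []]; vm_compute. Qed.

Lemma phi_step u v : step u v -> phi u = phi v.
Proof.
case=> x y r hr.
rewrite /phi !foldl_cat -/(phi x) (fold_phi r (gd_phi x)) (phi_rel hr) gmul_g0 //.
Qed.

Lemma phi_weq u v : weq u v -> phi u = phi v.
Proof. elim=> // [x y|x y z _ -> _ ->] //; exact: phi_step. Qed.

Fixpoint zpn (z : word) (n : nat) : word :=
  match n with O => [::] | Datatypes.S n => zpn z n ++ z end.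
Definition zp (z : word) (k : Z) : word :=
  if (0 <=? k) then zpn z (Z.to_nat k) else zpn (winv z) (Z.to_nat (- k)).
Lemma zpn_S z n : zpn z n.+1 = zpn z n ++ z. Proof. by []. Qed.
Definition comm (u v : word) := weq (u ++ v) (v ++ u).
Definition central (z : word) := forall v, comm z v.

Lemma comm_sym u v : comm u v -> comm v u.
Proof. exact: weq_sym. Qed.

Lemma comm_cat z x y : comm z x -> comm z y -> comm z (x ++ y).
Proof.
rewrite /comm => h1 h2.
apply: weq_trans (_ : weq _ (x ++ z ++ y)) _.
  by have := weq_catr y h1; rewrite -!catA.
by have := weq_catl x h2; rewrite -!catA.
Qed.

Lemma comm_inv z x : comm z x -> comm z (winv x).
Proof.
rewrite /comm => h.
have e1 := weq_catr (z ++ winv x) (weq_cancell x); rewrite /= -catA in e1.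
apply: weq_trans e1 _.
have e2 := weq_ctx (winv x) (winv x) (weq_sym h); rewrite -!catA in e2.
apply: weq_trans e2 _.
have e3 := weq_catl (winv x ++ z) (weq_sym (weq_cancelr x)); rewrite cats0 -!catA in e3.
exact: e3.
Qed.

Lemma central_letters z : (forall l, comm z [:: l]) -> central z.
Proof.
move=> h v; elim: v => [|l v ih]; first by rewrite /comm cats0; exact: weq_refl.
by rewrite -cat1s; apply: comm_cat.
Qed.

Lemma central_winv z : central z -> central (winv z).
Proof. move=> h v; apply: comm_sym; apply: comm_inv; apply: comm_sym; exact: h. Qed.

Lemma central_cat z z' : central z -> central z' -> central (z ++ z').
Proof.
move=> h h' v; rewrite /comm.
apply: weq_trans (_ : weq _ (z ++ v ++ z')) _.
  by rewrite -catA; apply: weq_catl; exact: h'.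
by rewrite !catA; apply: weq_catr; exact: h.
Qed.

Lemma central_nil : central [::].
Proof. by move=> v; rewrite /comm cats0; exact: weq_refl. Qed.

Lemma central_zpn z n : central z -> central (zpn z n).
Proof. move=> h; elim: n => /= [|n ih]; [exact: central_nil | exact: central_cat]. Qed.

Lemma central_zp z k : central z -> central (zp z k).
Proof. move=> h; rewrite /zp; case: ifP => _; apply: central_zpn => //; exact: central_winv. Qed.

Lemma cent_move z u v : central z -> weq (u ++ z ++ v) (z ++ u ++ v).
Proof. by move=> h; rewrite !catA; apply: weq_catr; apply: weq_sym; exact: h. Qed.

Lemma comm_letter_gen z : comm z a -> comm z b -> comm z s -> central z.
Proof.
move=> ha hb hs; apply: central_letters => -[[] []].
- exact: (comm_inv ha).
- exact: ha.
- exact: (comm_inv hb).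
- exact: hb.
- exact: (comm_inv hs).
- exact: hs.
Qed.

Lemma central_z1 : central z1.
Proof. apply: comm_letter_gen; [exact: F_z1a | exact: F_z1b | exact: F_z1s]. Qed.
Lemma central_z2 : central z2.
Proof. apply: comm_letter_gen; [exact: F_z2a | exact: F_z2b | exact: F_z2s]. Qed.

Lemma zpS z k : weq (zp z k ++ z) (zp z (k + 1)).
Proof.
rewrite /zp; case: (Z.leb_spec 0 k) => hk.
  have -> : (0 <=? k + 1) = true by apply/Z.leb_le; lia.
  have -> : Z.to_nat (k + 1) = (Z.to_nat k).+1 by lia.
  exact: weq_refl.
have -> : Z.to_nat (- k) = (Z.to_nat (- k - 1)).+1 by lia.
change (if 0 <=? k + 1 then _ else _) with (zp z (k+1)).
rewrite zpn_S.
have -> : zpn (winv z) (Z.to_nat (- k - 1)) = zp z (k + 1).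
  rewrite /zp; case: (Z.leb_spec 0 (k + 1)) => h2.
    have -> : k = -1 by lia.
    by [].
  by congr zpn; lia.
rewrite -catA.
have := weq_catl (zp z (k + 1)) (weq_sym (weq_cancell z)); rewrite cats0; apply.
Qed.

Lemma zpP z k : weq (zp z k ++ winv z) (zp z (k - 1)).
Proof.
have h := zpS z (k - 1); rewrite (_ : k - 1 + 1 = k) in h; last by lia.
apply: weq_trans (weq_catr _ (weq_sym h)) _; rewrite -catA.
have := weq_catl (zp z (k - 1)) (weq_sym (weq_cancelr z)); rewrite cats0; apply.
Qed.

Lemma zp_add z i j : weq (zp z i ++ zp z j) (zp z (i + j)).
Proof.
elim/Z.peano_ind: j.
- by rewrite Z.add_0_r /= cats0; exact: weq_refl.
- move=> j ih; rewrite -Z.add_1_r.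
  apply: weq_trans (weq_catl _ (weq_sym (zpS z j))) _.
  rewrite catA; apply: weq_trans (weq_catr _ ih) _.
  rewrite Z.add_assoc; exact: zpS.
- move=> j ih; rewrite -Z.sub_1_r.
  apply: weq_trans (weq_catl _ (weq_sym (zpP z j))) _.
  rewrite catA; apply: weq_trans (weq_catr _ ih) _.
  rewrite Z.add_sub_assoc; exact: zpP.
Qed.

Definition Zp (m1 m2 : Z) : word := zp z1 m1 ++ zp z2 m2.

Lemma central_Zp m1 m2 : central (Zp m1 m2).
Proof. apply: central_cat; apply: central_zp; [exact: central_z1 | exact: central_z2]. Qed.

Lemma Zp_add a1 b1 a2 b2 : weq (Zp a1 b1 ++ Zp a2 b2) (Zp (a1 + a2) (b1 + b2)).
Proof.
rewrite /Zp -catA.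
apply: weq_trans (weq_catl _ (cent_move _ _ (central_zp _ central_z1))) _.
rewrite catA; apply: weq_cat; exact: zp_add.
Qed.

Lemma move_t_letter l : nos l ->
  weq ([:: l] ++ t) (Zp (abl1 l) (abl2 l) ++ t ++ [:: linv l]).
Proof.
case: l => [[] []] //= _.
- exact: F_tA.
- exact: F_ta.
- exact: F_tB.
- exact: F_tb.
Qed.

Lemma move_t f : all nos f ->
  weq (rev f ++ t) (Zp (ab1 f) (ab2 f) ++ t ++ rev (alpha f)).
Proof.
elim: f => [|l f ih]; first by move=> _; exact: weq_refl.
move=> /andP [hl hf].
rewrite rev_cons -cats1 -catA.
apply: weq_trans (weq_catl _ (move_t_letter hl)) _.
apply: weq_trans (cent_move _ _ (central_Zp _ _)) _.
rewrite [rev f ++ _]catA; apply: weq_trans (weq_catl _ (weq_catr _ (ih hf))) _.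
have hZ := Zp_add (abl1 l) (abl2 l) (ab1 f) (ab2 f).
rewrite ab1_cons ab2_cons; move: hZ.
move: (Zp (abl1 l) (abl2 l)) (Zp (ab1 f) (ab2 f)) (Zp (abl1 l + ab1 f) (abl2 l + ab2 f)) => P Q R hZ.
rewrite /alpha map_cons rev_cons -/(alpha f) -cats1 -!catA.
rewrite catA; exact: weq_catr.
Qed.

Definition NF (g : stt) : word :=
  (if se g then t else [::]) ++ Zp (sm1 g) (sm2 g) ++ rev (sf g).

Lemma Zp_eq a1 b1 a2 b2 : a1 = a2 -> b1 = b2 -> Zp a1 b1 = Zp a2 b2.
Proof. by move=> -> ->. Qed.

Lemma NF_rmul g l : gd g -> weq (NF g ++ [:: l]) (NF (rmul g l)).
Proof.
case: g => e m1 m2 f; rewrite /gd /good /= => /andP [hrd hnos].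
case: l => [[] sg].
1,2: rewrite /NF /rmul; cbn [se sm1 sm2 sf];
  move: (if e then t else [::]) (Zp m1 m2) => T P;
  rewrite -!catA; apply: weq_catl; apply: weq_catl; exact: weq_push.
have hs : weq [:: (gen_s, sg)] (t ++ Zp 0 (-1) ++ (if sg then [:: lb; lA] else [:: lA; lb])) by case: sg; [exact: F_S | exact: F_s].
have h1 := move_t hnos.
have h2 := weq_fold (alpha f) (if sg then [:: lb; lA] else [:: lA; lb]).
have hA1 := Zp_add m1 m2 (ab1 f) (ab2 f).
have hA2 := Zp_add (m1 + ab1 f) (m2 + ab2 f) 0 (-1).
have hA3 := Zp_add 1 1 (m1 + ab1 f + 0) (m2 + ab2 f + -1).
have c0 := cent_move (t ++ rev (alpha f)) (if sg then [:: lb; lA] else [:: lA; lb]) (central_Zp 0 (-1)).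
have c1 := cent_move t (rev (alpha f) ++ (if sg then [:: lb; lA] else [:: lA; lb])) (central_Zp (m1 + ab1 f + 0) (m2 + ab2 f + -1)).
have htt : weq (t ++ t) (Zp 1 1) := F_tt.
rewrite /NF /rmul; cbn [se sm1 sm2 sf].
have -> : Zp (m1 + ab1 f + bz e) (m2 + ab2 f - 1 + bz e) =
   if e then Zp (1 + (m1 + ab1 f + 0)) (1 + (m2 + ab2 f + -1))
   else Zp (m1 + ab1 f + 0) (m2 + ab2 f + -1).
  by case: e; apply: Zp_eq; rewrite /bz; lia.
move: hs h1 h2 hA1 hA2 hA3 c0 c1 htt.
move: (Zp 0 (-1)) (Zp m1 m2) (Zp (ab1 f) (ab2 f)) (Zp (m1 + ab1 f) (m2 + ab2 f))
  (Zp (m1 + ab1 f + 0) (m2 + ab2 f + -1)) (Zp 1 1)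
  (Zp (1 + (m1 + ab1 f + 0)) (1 + (m2 + ab2 f + -1)))
  (rev (alpha f)) (rev f) (if sg then [:: lb; lA] else [:: lA; lb]) t (rev (foldl push (alpha f) (if sg then [:: lb; lA] else [:: lA; lb])))
  => P0 Pm Pf Pmf Q P11 Q1 AF F W' tt R hs h1 h2 hA1 hA2 hA3 c0 c1 htt.
have chain : forall T0, weq ((T0 ++ Pm ++ F) ++ [:: (gen_s, sg)]) (T0 ++ tt ++ Q ++ R).
  move=> T0; rewrite -!catA.
  have s1 := weq_catl (T0 ++ Pm ++ F) hs; rewrite -?catA in s1.
  apply: weq_trans s1 _.
  have s2 := weq_ctx (T0 ++ Pm) (P0 ++ W') h1; rewrite -?catA in s2.
  apply: weq_trans s2 _.
  have s3 := weq_catl (T0 ++ Pm ++ Pf) c0; rewrite -?catA in s3.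
  apply: weq_trans s3 _.
  have s4 := weq_ctx T0 (P0 ++ tt ++ AF ++ W') hA1; rewrite -?catA in s4.
  apply: weq_trans s4 _.
  have s5 := weq_ctx T0 (tt ++ AF ++ W') hA2; rewrite -?catA in s5.
  apply: weq_trans s5 _.
  have s6 := weq_catl T0 (weq_sym c1); rewrite -?catA in s6.
  apply: weq_trans s6 _.
  have s7 := weq_catl (T0 ++ tt ++ Q) h2; rewrite -?catA in s7.
  exact: s7.
case: e => /=; last exact: (chain [::]).
apply: weq_trans (chain tt) _.
have s8 := weq_catr (Q ++ R) htt; rewrite -?catA in s8.
apply: weq_trans s8 _.
have s9 := weq_catr R hA3; rewrite -?catA in s9.
exact: s9.
Qed.

Lemma NF_fold g w : gd g -> weq (NF g ++ w) (NF (foldl rmul g w)).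
Proof.
elim: w g => [|l w ih] g hg /=; first by rewrite cats0; exact: weq_refl.
apply: weq_trans (ih _ (gd_rmul l hg)).
rewrite -cat1s catA; apply: weq_catr; exact: NF_rmul.
Qed.

Lemma weq_NF w : weq w (NF (phi w)).
Proof. have h := @NF_fold g0 w isT. exact: h. Qed.

Definition th1 (g : stt) := 2 * sm1 g + ab1 (sf g) + bz (se g).
Definition th2 (g : stt) := 2 * sm2 g + ab2 (sf g) + bz (se g).

Lemma th1_gmul h k : th1 (gmul h k) = th1 h + th1 k.
Proof.
case: h => e1 a1 b1 f1; case: k => e2 a2 b2 f2; rewrite /th1 /gmul; cbn [se sm1 sm2 sf].
rewrite ab1_fold ab1_alphaif ab1_rev; case: e1; case: e2; cbn [bz addb andb negb]; lia.
Qed.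
Lemma th2_gmul h k : th2 (gmul h k) = th2 h + th2 k.
Proof.
case: h => e1 a1 b1 f1; case: k => e2 a2 b2 f2; rewrite /th2 /gmul; cbn [se sm1 sm2 sf].
rewrite ab2_fold ab2_alphaif ab2_rev; case: e1; case: e2; cbn [bz addb andb negb]; lia.
Qed.

Lemma th_winv u : th1 (phi (winv u)) = - th1 (phi u) /\ th2 (phi (winv u)) = - th2 (phi u).
Proof.
have := phi_weq (weq_cancell u); rewrite phi_cat => h.
have h1 := congr1 th1 h; have h2 := congr1 th2 h.
rewrite th1_gmul in h1; rewrite th2_gmul in h2.
move: h1 h2; rewrite /th1 /th2 /=; lia.
Qed.

Lemma th_comm x y : th1 (phi (wcomm x y)) = 0 /\ th2 (phi (wcomm x y)) = 0.
Proof.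
rewrite /wcomm !phi_cat !th1_gmul !th2_gmul.
have [a1 a2] := th_winv x; have [b1 b2] := th_winv y; lia.
Qed.

Lemma gamma_th w : in_Gamma2 w -> th1 (phi w) = 0 /\ th2 (phi w) = 0.
Proof.
case=> l /phi_weq ->; elim: l => [|p l ih] /=; first by [].
rewrite phi_cat th1_gmul th2_gmul; have [c1 c2] := th_comm p.1 p.2; lia.
Qed.

Lemma rd_catl u v : rd (u ++ v) -> rd u.
Proof.
elim: u => [|x u ih] //=; case: u ih => [|y u] ih //= /andP [h1 h2].
by rewrite h1; apply: ih.
Qed.

Lemma rd_cat2 u y x : rd (u ++ [:: y]) -> x != linv y -> rd (u ++ [:: y; x]).
Proof.
elim: u => [|z u ih] /=; first by move=> _ ->.
case: u ih => [|w u] ih /=; first by move=> /andP [-> _] ->.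
by move=> /andP [-> h] hx /=; apply: ih.
Qed.

Lemma cons_rcons_all (x : letter) f : x :: f = rcons f x -> all (pred1 x) f.
Proof.
elim: f => [|y f ih] //= [exy e]; subst y.
by rewrite eqxx ih.
Qed.

Lemma comm_free f x : rd f -> push f x = foldl push [:: x] (rev f) ->
  all (fun y : letter => y.1 == x.1) f.
Proof.
case/lastP: f => [|f y] // hrd.
have hf : rd f by apply: (@rd_catl f [:: y]); rewrite cats1.
have [h [tl E]] : exists h tl, rcons f y = h :: tl.
  by case: f {hrd hf} => [|z f] /=; do 2 eexists.
have hs : size tl = size f by have := congr1 size E; rewrite size_rcons /=; case.
rewrite rev_rcons /=.
have sub : forall q, all (pred1 q) (h :: tl) -> q.1 = x.1 -> all (fun y0 : letter => y0.1 == x.1) (h :: tl).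
  by move=> q hq hqx; apply: sub_all hq => z /eqP -> /=; rewrite hqx.
case: ifP => hxy e.
  rewrite fold_rev_rd // in e; move: e; rewrite E /=.
  case: (h =P linv x) => hh e.
    subst tl; move/eqP: hxy => hxy.
    have hy : y = linv x by rewrite hxy linvK.
    subst y; apply: (sub (linv x)) => //.
    rewrite /= hh eqxx /=; apply: cons_rcons_all; by rewrite E hh.
  by have := congr1 size e; rewrite /= hs => /eqP; rewrite -addn2 -{2}[size f]addn0 eqn_add2l.
rewrite fold_cat_rd in e; last by apply: rd_cat2; [rewrite cats1 | rewrite hxy].
move: e; rewrite E /=.
case: (h =P linv x) => hh e.
  by have := congr1 size e; rewrite size_cat /= hs => /eqP; rewrite -{1}[size f]addn0 eqn_add2l.
apply: (sub x) => //; rewrite -E; apply: cons_rcons_all.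
by rewrite E e -E -!cats1 -catA.
Qed.

Lemma center_props w : in_center w -> se (phi w) = false /\ sf (phi w) = [::].
Proof.
move=> hc.
have ha := phi_weq (hc a); have hb := phi_weq (hc b).
rewrite !phi_cat in ha hb.
have gw := gd_phi w.
move: ha hb gw; case: (phi w) => e m1 m2 f.
have -> : phi a = St false 0 0 [:: la] by [].
have -> : phi b = St false 0 0 [:: lb] by [].
rewrite /gd /good /= => ha hb /andP [hrd _].
have e0 : e = false.
  have := congr1 sm1 ha; rewrite /gmul; cbn [se sm1 sm2 sf].
  case: e {ha hb} => //; cbn [bz addb andb negb]; rewrite (_ : ab1 [:: la] = 1) //; lia.
subst e; split => //.
have fa := congr1 sf ha; have fb := congr1 sf hb.
rewrite /gmul in fa fb; cbn [se sm1 sm2 sf] in fa, fb.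
have Ha := comm_free hrd fa; have Hb := comm_free hrd fb.
case: f {ha hb fa fb hrd} Ha Hb => [|y f] //= /andP [/eqP h1 _] /andP [/eqP h2 _].
by rewrite h1 in h2.
Qed.

Theorem proposition4p2 :
  forall w : word, in_Gamma2 w -> in_center w -> weq w [::].
Proof.
move=> w hg hc.
have [he hf] := center_props hc.
have [t1 t2] := gamma_th hg.
have hphi : phi w = g0.
  move: he hf t1 t2; case: (phi w) => e m1 m2 f; cbn [se sf] => -> ->.
  rewrite /th1 /th2; cbn [se sm1 sm2 sf bz] => h1 h2.
  have a0 : ab1 [::] = 0 by [].
  have b0 : ab2 [::] = 0 by [].
  rewrite /g0; congr St; lia.
apply: weq_trans (weq_NF w) _; rewrite hphi; exact: weq_refl.
Qed.
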